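(* Let $\mathfrak{g}$ be a complex simple Lie algebra with Cartan subalgebra $\mathfrak{h}$, root system $\Delta$, positive roots $\Delta^+$ and simple roots $\Pi$; let $\Sigma\subset\Pi$, $\mathfrak{p}=\mathfrak{l}\oplus\mathfrak{u}$ the associated standard parabolic subalgebra and $\bar{\mathfrak{u}}=\bigoplus_{\alpha\in\Delta(\mathfrak{u})}\mathfrak{g}_{-\alpha}$ its opposite nilradical, $\Delta(\mathfrak{u})=\Delta^+\setminus\Delta^+_\Sigma$. Let $\{f_\alpha;\alpha\in\Delta(\mathfrak{u})\}$ be a basis of $\bar{\mathfrak{u}}$, and let $x_{\alpha,n}$ ($\alpha\in\Delta(\mathfrak{u}),n\in\mathbb{Z}$) be commuting variables which commute with $\widehat{\mathfrak{g}}$. Put $u(x)=\sum_{\alpha\in\Delta(\mathfrak{u})}\sum_{n\in\mathbb{Z}}x_{\alpha,n}f_{\alpha,n}$ where $f_{\alpha,n}=f_\alpha\otimes t^n$, $a^*_\alpha(z)=\sum_{n\in\mathbb{Z}}x_{\alpha,-n}z^{-n}$ and $u(z)=\sum_{\alpha\in\Delta(\mathfrak{u})}a^*_\alpha(z)f_\alpha$. Then for all $a\in\mathfrak{g}$ and $k\in\mathbb{N}$, $$(\operatorname{ad}(u(x)))^k(a(z))=(\operatorname{ad}(u(z)))^k(a(z))+(-1)^{k-1}\big((\operatorname{ad}(u(z)))^{k-1}(\partial_z u(z)),a\big)c.$$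
   Context: $(\cdot,\cdot)$ is the $\mathfrak{g}$-invariant symmetric bilinear form on $\mathfrak{g}$ normalized by $(\theta,\theta)=2$ for the maximal root $\theta$. The affine Kac-Moody algebra is $\widehat{\mathfrak{g}}=\mathfrak{g}\otimes\mathbb{C}((t))\oplus\mathbb{C}c$ with $c$ central and $[a_m,b_n]=[a,b]_{m+n}+m(a,b)\delta_{m,-n}c$, where $a_n=a\otimes t^n$. For $a\in\mathfrak{g}$, $a(z)=\sum_{n\in\mathbb{Z}}a_nz^{-n-1}$. The left side is computed in $\widehat{\mathfrak{g}}$ with coefficients polynomial in the $x$'s. On the right, $\mathfrak{g}\otimes P(z)$ (with $P(z)$ the polynomial algebra in the $a^*_\alpha(z)$) is a Lie algebra over $P(z)$, and an element $\sum_r P_r(z)b_r$ ($b_r\in\mathfrak{g}$, $P_r(z)\in P(z)$) is identified with $\sum_rP_r(z)b_r(z)$; in particular $(\operatorname{ad}u(z))^k(a(z))$ means $(\operatorname{ad}u(z))^k(a)$ with each $b\in\mathfrak{g}$ replaced by $b(z)$. The form $(\cdot,\cdot)$ is extended $P(z)$-bilinearly, and $\partial_zu(z)=\sum_\alpha\partial_za^*_\alpha(z)f_\alpha$. *)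

(* Defs.v *)
From mathcomp Require Import all_boot all_algebra.
From mathcomp Require Import finmap multiset complex Rstruct.
From Stdlib Require Import Reals.
Set Implicit Arguments. Unset Strict Implicit. Unset Printing Implicit Defensive.
Import GRing.Theory.
Local Open Scope ring_scope.

Definition C : fieldType := (Rdefinitions.R)[i].

Section LieData.
Variable g : vectType C.
Variable br : g -> g -> g.

Definition is_lie_bracket :=
  [/\ forall (a : C) x y z, br (a *: x + y) z = a *: br x z + br y z,
      forall (a : C) x y z, br z (a *: x + y) = a *: br z x + br z y,
      forall x, br x x = 0 &
      forall x y z, br x (br y z) + br y (br z x) + br z (br x y) = 0].

Definition simple_lie :=
  (exists x y, br x y != 0) /\
  forall I : {vspace g}, (forall x y, y \in I -> br x y \in I) ->
    I = 0%VS \/ I = fullv.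

Definition inv_sym_form (form : g -> g -> C) :=
  [/\ forall (a : C) x y z, form (a *: x + y) z = a * form x z + form y z,
      forall x y, form x y = form y x &
      forall x y z, form (br x y) z = form x (br y z)].

Definition toral (T : {vspace g}) :=
  (forall x y, x \in T -> y \in T -> br x y = 0) /\
  (forall x, x \in T -> exists2 B : seq g, basis_of fullv B &
       forall v, v \in B -> exists c : C, br x v = c *: v).

Definition cartan (h : {vspace g}) :=
  toral h /\ forall T, toral T -> (h <= T)%VS -> T = h.

Variable h : {vspace g}.

Definition hdual := 'Hom(subvs_of h, C^o).

Definition rspace (l : hdual) : {vspace g} :=
  (\bigcap_(t <- vbasis h) lker (linfun (fun x : g => br t x - (l (vsproj h t) : C) *: x)))%VS.

Definition isroot (l : hdual) : bool := (l != 0) && (rspace l != 0%VS).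

Definition comb_nat (s : seq hdual) (l : hdual) :=
  exists c : 'I_(size s) -> nat, l = \sum_(i < size s) (c i)%:R *: s`_i.

Definition is_base (Pi : seq hdual) :=
  [/\ free Pi, all isroot Pi &
      forall l, isroot l -> comb_nat Pi l \/ comb_nat Pi (- l)].

Definition pos_root (Pi : seq hdual) l := isroot l /\ comb_nat Pi l.

Definition in_Du (Pi Sig : seq hdual) l := pos_root Pi l /\ ~ comb_nat Sig l.

Definition ubar (Du : seq hdual) : {vspace g} := (\sum_(l <- Du) rspace (- l))%VS.

(* (theta, theta) = 2 for the maximal root theta, the form on h^* being
   induced by the (nondegenerate) form on h *)
Definition normalized (form : g -> g -> C) (Pi : seq hdual) :=
  exists th : hdual,
    [/\ pos_root Pi th,
        (forall l, pos_root Pi l -> ~~ isroot (th + l)) &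
        exists2 t, t \in h &
          (forall y : subvs_of h, form t (vsval y) = (th y : C)) /\
          (th (vsproj h t) : C) = 2].
End LieData.

(* Monomials in the commuting variables x_{alpha,n} (alpha in A, n in Z)    *)
(* are finite multisets over A * int.                                       *)
Definition Mon (A : finType) := multiset (A * int)%type.

Section Series.
Variables (A : finType) (g : vectType C) (br : g -> g -> g)
          (form : g -> g -> C) (f : A -> g).

(* Elements of the completed (hat g)[x][[z, z^-1]]:
   W = sum_{e, mu} z^e x^mu ( sum_N gpart e mu N (x) t^N  +  cpart e mu c ). *)
Record W := mkW { gpart : int -> Mon A -> int -> g ; cpart : int -> Mon A -> C }.

(* a(z) = sum_n a_n z^{-n-1} *)
Definition az (a : g) : W :=
  mkW (fun e mu N => if (mu == mset0) && (N == - e - 1) then a else 0)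
      (fun _ _ => 0).

(* ad(u(x)) with u(x) = sum_{alpha,n} x_{alpha,n} f_{alpha,n}, computed
   coefficientwise (each coefficient of the infinite sum is a finite sum):
   [x_{al,n} f_{al,n}, b_j] = x_{al,n} ([f_al, b]_{n+j} + n (f_al, b) delta_{n,-j} c),
   c central. *)
Definition adux (F : W) : W :=
  mkW (fun e mu N => \sum_(p <- finsupp mu)
                        br (f p.1) (gpart F e (mu `\ p)%mset (N - p.2)))
      (fun e mu => \sum_(p <- finsupp mu)
                        p.2%:~R * form (f p.1) (gpart F e (mu `\ p)%mset (- p.2))).

(* g (x) S, S = formal series in z, x : X e mu = coefficient of z^e x^mu *)
Definition GS := int -> Mon A -> g.

(* multiplication by a*_al(z) = sum_n x_{al,-n} z^{-n} = sum_m x_{al,m} z^m *)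
Definition astar (al : A) (X : GS) : GS :=
  fun e mu => \sum_(p <- finsupp mu | p.1 == al) X (e - p.2) (mu `\ p)%mset.

(* multiplication by d/dz a*_al(z) = sum_m m x_{al,m} z^{m-1} *)
Definition dastar (al : A) (X : GS) : GS :=
  fun e mu => \sum_(p <- finsupp mu | p.1 == al)
                 p.2%:~R *: X (e - p.2 + 1) (mu `\ p)%mset.

Definition constS (b : g) : GS :=
  fun e mu => if (e == 0) && (mu == mset0) then b else 0.

(* ad(u(z)) in the Lie algebra g (x) S (S-bilinear extension of the bracket),
   u(z) = sum_al a*_al(z) f_al *)
Definition aduz (X : GS) : GS :=
  fun e mu => \sum_(al : A) astar al (fun e' mu' => br (f al) (X e' mu')) e mu.

Definition duz : GS := fun e mu => \sum_(al : A) dastar al (constS (f al)) e mu.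

Definition pairS (X : GS) (b : g) : int -> Mon A -> C := fun e mu => form (X e mu) b.

(* identification  sum_r P_r b_r  |->  sum_r P_r b_r(z),  b(z) = sum_N b_N z^{-N-1} *)
Definition realize (X : GS) : int -> Mon A -> int -> g :=
  fun e mu N => X (e + N + 1) mu.

(* right-hand side of the identity; the correction term is 0 when k = 0 *)
Definition rhs (a : g) (k : nat) : W :=
  mkW (realize (iter k aduz (constS a)))
      (if k is k'.+1 then
         fun e mu => (-1) ^+ k' * pairS (iter k' aduz duz) a e mu
       else fun _ _ => 0).
End Series.

(* Main.v *)
Require Import Defs.
From mathcomp Require Import all_boot all_algebra.
From mathcomp Require Import finmap multiset complex Rstruct.
From mathcomp Require Import zify.
From Stdlib Require Import FunctionalExtensionality.
Set Implicit Arguments. Unset Strict Implicit. Unset Printing Implicit Defensive.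
Import GRing.Theory.
Local Open Scope ring_scope.

Definition Op (A : finType) (V : lmodType C) (al : A) (w : int -> C) (s : int)
  (X : int -> Mon A -> V) : int -> Mon A -> V :=
  fun e mu => \sum_(p <- finsupp mu | p.1 == al) w p.2 *: X (e - p.2 + s) (mu `\ p)%mset.

Lemma sum_suppB (A : finType) (V : nmodType) (mu : Mon A) p (P : pred (A*int))
  (F : A*int -> V) :
  \sum_(q <- finsupp (mu `\ p)%mset | P q) F q =
  \sum_(q <- finsupp mu | P q && (q \in (mu `\ p)%mset)) F q.
Proof.
rewrite big_mkcond [RHS]big_mkcond /=.
transitivity (\sum_(q <- finsupp (mu `\ p)%mset)
   (if q \in (mu `\ p)%mset then (if P q then F q else 0) else 0)).
  by apply: eq_big_seq => q; rewrite msuppE => ->.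
rewrite (big_fset_incl _ (B := finsupp mu)).
- by apply: eq_bigr => q _; case: (P q); case: (q \in _).
- by apply/fsubsetP => q; rewrite !msuppE in_msetB1 => /andP[].
- by move=> q _; rewrite msuppE => /negbTE ->.
Qed.

Lemma memB_swap (A : finType) (mu : Mon A) p q : p \in mu -> q \in mu ->
  (q \in (mu `\ p)%mset) = (p \in (mu `\ q)%mset).
Proof.
move=> pm qm; rewrite !in_msetB1 pm qm !andbT.
by case: (eqVneq q p) => [->|].
Qed.

Lemma msetBB (A : finType) (mu : Mon A) p q :
  ((mu `\ p) `\ q)%mset = ((mu `\ q) `\ p)%mset.
Proof. by apply/msetP => x; rewrite !msetB1E subnAC. Qed.

Lemma Op_comm A (V : lmodType C) al1 w1 s1 al2 w2 s2 (X : int -> Mon A -> V) :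
  Op al1 w1 s1 (Op al2 w2 s2 X) = Op al2 w2 s2 (Op al1 w1 s1 X).
Proof.
apply: functional_extensionality => e; apply: functional_extensionality => mu.
rewrite /Op.
under eq_bigr do rewrite sum_suppB scaler_sumr.
under [RHS]eq_bigr do rewrite sum_suppB scaler_sumr.
rewrite (exchange_big_dep (fun q => q.1 == al2)) /=; last by move=> i j _ /andP[].
rewrite big_seq_cond [RHS]big_seq_cond.
apply: eq_bigr => q /andP[qS qal].
rewrite big_seq_cond [RHS]big_seq_cond.
apply: eq_big => [p|p /andP[pS /andP[_ /andP[_ _]]]].
  case pS: (p \in finsupp mu) => //=; rewrite qal /=.
  by rewrite memB_swap // -msuppE.
rewrite !scalerA mulrC msetBB.
by congr (_ *: X _ _); lia.
Qed.

Definition lin (U V : lmodType C) (phi : U -> V) :=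
  forall c x y, phi (c *: x + y) = c *: phi x + phi y.

Section LinFacts.
Variables (U V : lmodType C) (phi : U -> V) (H : lin phi).
Lemma lin0 : phi 0 = 0.
Proof. by have := H (-1) 0 0; rewrite scaler0 addr0 scaleN1r addNr. Qed.
Lemma linD x y : phi (x + y) = phi x + phi y.
Proof. by have := H 1 x y; rewrite !scale1r. Qed.
Lemma linZ c x : phi (c *: x) = c *: phi x.
Proof. by rewrite -(addr0 (c *: x)) H lin0 addr0. Qed.
Lemma lin_sum I (r : seq I) (P : pred I) F :
  phi (\sum_(i <- r | P i) F i) = \sum_(i <- r | P i) phi (F i).
Proof. by apply: big_morph; [exact: linD | exact: lin0]. Qed.
End LinFacts.

Definition pw (A : finType) (U V : Type) (phi : U -> V) (X : int -> Mon A -> U) :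
  int -> Mon A -> V := fun e mu => phi (X e mu).

Lemma Op_pw (A : finType) (U V : lmodType C) (phi : U -> V) al w s (X : int -> Mon A -> U) :
  lin phi -> pw phi (Op al w s X) = Op al w s (pw phi X).
Proof.
move=> H; apply: functional_extensionality => e; apply: functional_extensionality => mu.
by rewrite /pw /Op (lin_sum H); apply: eq_bigr => p _; rewrite (linZ H).
Qed.

Lemma Op_sum (A : finType) (V : lmodType C) al w s I (r : seq I) (P : pred I)
   (F : I -> int -> Mon A -> V) :
  Op al w s (fun e mu => \sum_(i <- r | P i) F i e mu) =
  fun e mu => \sum_(i <- r | P i) Op al w s (F i) e mu.
Proof.
apply: functional_extensionality => e; apply: functional_extensionality => mu.
rewrite /Op; under eq_bigr do rewrite scaler_sumr; exact: exchange_big.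
Qed.

Definition one_w : int -> C := fun _ => 1.

Definition Mw (A : finType) (V : lmodType C) (t : seq A) (X : int -> Mon A -> V) :=
  foldr (fun al Y => Op al one_w 0 Y) X t.

Lemma Mw_pw (A : finType) (U V : lmodType C) (phi : U -> V) t (X : int -> Mon A -> U) :
  lin phi -> pw phi (Mw t X) = Mw t (pw phi X).
Proof. by move=> H; elim: t => //= al t IH; rewrite Op_pw // IH. Qed.

Lemma Mw_sum (A : finType) (V : lmodType C) t I (r : seq I) (P : pred I)
   (F : I -> int -> Mon A -> V) :
  Mw t (fun e mu => \sum_(i <- r | P i) F i e mu) =
  fun e mu => \sum_(i <- r | P i) Mw t (F i) e mu.
Proof. by elim: t => //= al t IH; rewrite IH Op_sum. Qed.

Lemma Op_Mw (A : finType) (V : lmodType C) al w s t (X : int -> Mon A -> V) :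
  Op al w s (Mw t X) = Mw t (Op al w s X).
Proof. by elim: t => //= be t IH; rewrite Op_comm IH. Qed.

Lemma Mw_rev (A : finType) (V : lmodType C) t (X : int -> Mon A -> V) :
  Mw (rev t) X = Mw t X.
Proof.
elim: t X => //= al t IH X; rewrite rev_cons /Mw foldr_rcons.
by rewrite -/(Mw (rev t) _) IH -Op_Mw.
Qed.

Definition nest (A : finType) (g : vectType C) (br : g -> g -> g) (f : A -> g) (t : seq A) b :=
  foldr (fun al b => br (f al) b) b t.

Lemma sum_tupleS (V : nmodType) (T : finType) k (G : seq T -> V) :
  \sum_(t : k.+1.-tuple T) G t = \sum_(x : T) \sum_(t : k.-tuple T) G (x :: t).
Proof.
rewrite pair_big /=.
rewrite (reindex (fun p : T * k.-tuple T => cons_tuple p.1 p.2)) //=.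
exists (fun t : k.+1.-tuple T => (thead t, behead_tuple t)).
  by move=> [x t] _ /=; congr pair; apply: val_inj.
by move=> t _; rewrite [RHS]tuple_eta; apply: val_inj.
Qed.

Lemma sum_tuple0 (V : nmodType) (T : finType) (G : seq T -> V) :
  \sum_(t : 0.-tuple T) G t = G [::].
Proof.
rewrite (big_pred1 [tuple]) // => t; apply/esym/eqP; exact: tuple0.
Qed.

Lemma linN (U V : lmodType C) (phi : U -> V) x : lin phi -> phi (- x) = - phi x.
Proof. by move=> H; rewrite -scaleN1r (linZ H) scaleN1r. Qed.

Lemma pw_sum (A : finType) (U V : lmodType C) (phi : U -> V) I (r : seq I) (P : pred I)
   (F : I -> int -> Mon A -> U) : lin phi ->
  pw phi (fun e mu => \sum_(i <- r | P i) F i e mu) =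
  fun e mu => \sum_(i <- r | P i) pw phi (F i) e mu.
Proof.
move=> H; apply: functional_extensionality => e; apply: functional_extensionality => mu.
by rewrite /pw (lin_sum H).
Qed.

Definition constG (A : finType) (V : nmodType) (b : V) : int -> Mon A -> V :=
  fun e mu => if (e == 0) && (mu == mset0) then b else 0.

Lemma pw_const (A : finType) (U V : lmodType C) (phi : U -> V) (b : U) :
  lin phi -> pw phi (@constG A _ b) = @constG A _ (phi b).
Proof.
move=> H; apply: functional_extensionality => e; apply: functional_extensionality => mu.
by rewrite /pw /constG; case: ifP => _ //; exact: lin0.
Qed.

Lemma aduzE (A : finType) (g : vectType C) br (f : A -> g) X :
  aduz br f X = fun e mu => \sum_(al : A) Op al one_w 0 (pw (br (f al)) X) e mu.
Proof.
apply: functional_extensionality => e; apply: functional_extensionality => mu.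
rewrite /aduz /astar /Op; apply: eq_bigr => al _; apply: eq_bigr => p _.
by rewrite /one_w scale1r addr0.
Qed.

Lemma nest_lin (A : finType) (g : vectType C) (br : g -> g -> g) (f : A -> g) t :
  (forall x, lin (br x)) -> lin (nest br f t).
Proof.
move=> Hbr; elim: t => [|al t IH] c x y //=.
by rewrite /nest /= -/(nest br f t _) IH Hbr.
Qed.

Lemma iter_aduz (A : finType) (g : vectType C) (br : g -> g -> g) (f : A -> g) k X :
  (forall x, lin (br x)) ->
  iter k (aduz br f) X =
  fun e mu => \sum_(t : k.-tuple A) Mw t (pw (nest br f t) X) e mu.
Proof.
move=> Hbr; elim: k => [|k IH].
  apply: functional_extensionality => e; apply: functional_extensionality => mu.
  by rewrite (sum_tuple0 (fun t => Mw t (pw (nest br f t) X) e mu)).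
rewrite iterS IH aduzE.
apply: functional_extensionality => e; apply: functional_extensionality => mu.
rewrite (sum_tupleS k (fun t => Mw t (pw (nest br f t) X) e mu)).
apply: eq_bigr => al _.
rewrite pw_sum // Op_sum; apply: eq_bigr => t _.
by rewrite Mw_pw.
Qed.

Section Scalar.
Variables (g : vectType C) (br : g -> g -> g) (form : g -> g -> C).
Hypotheses (Hlie : is_lie_bracket br) (Hform : inv_sym_form br form).

Lemma br_lin x : lin (br x).
Proof. by case: Hlie => _ H _ _ c u v; rewrite H. Qed.
Lemma br_linl y : lin (fun x => br x y).
Proof. by case: Hlie => H _ _ _ c u v; rewrite H. Qed.
Lemma br_anti x y : br x y = - br y x.
Proof.
case: Hlie => _ _ Hxx _.
have := Hxx (x + y).
rewrite (linD (br_linl _)) !(linD (br_lin _)) !Hxx add0r addr0.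
by move/eqP; rewrite addr_eq0 => /eqP.
Qed.
Lemma form_linl z : lin (fun x => (form x z : C^o)).
Proof. by case: Hform => H _ _ c u v; rewrite H. Qed.
Lemma form_linr z : lin (fun x => (form z x : C^o)).
Proof. by case: Hform => H Hs _ c u v; rewrite Hs H !(Hs z). Qed.
Lemma form_br c x y : form c (br x y) = - form (br x c) y.
Proof.
case: Hform => _ _ Hinv.
by rewrite -Hinv br_anti (linN _ (form_linl y)).
Qed.

Lemma form_nest (A : finType) (f : A -> g) a t c :
  form c (nest br f t a) = (-1) ^+ (size t) * form (nest br f (rev t) c) a.
Proof.
elim: t c => [|al t IH] c; first by rewrite expr0 mul1r.
rewrite /nest /= -/(nest br f t a) form_br IH rev_cons foldr_rcons -/(nest br f (rev t) _).
by rewrite exprS mulN1r mulNr.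
Qed.
End Scalar.

Lemma partition_fst (A : finType) (V : nmodType) (S : seq (A*int)) (F : A*int -> V) :
  \sum_(p <- S) F p = \sum_(al : A) \sum_(p <- S | p.1 == al) F p.
Proof.
under [RHS]eq_bigr do rewrite big_mkcond.
rewrite exchange_big; apply: eq_bigr => p _.
rewrite (bigD1 p.1) //= eqxx big1 ?addr0 // => al /negbTE.
by rewrite eq_sym => ->.
Qed.

Lemma W_eq (A : finType) (g : vectType C) (w1 w2 : W A g) :
  gpart w1 = gpart w2 -> cpart w1 = cpart w2 -> w1 = w2.
Proof. by case: w1; case: w2 => /= ? ? ? ? -> ->. Qed.

Definition intw : int -> C := fun n => n%:~R.

Lemma duzE (A : finType) (g : vectType C) (f : A -> g) :
  duz f = fun e mu => \sum_(al : A) Op al intw 1 (@constG A g (f al)) e mu.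
Proof. by []. Qed.

Lemma sum_tuple_rev (V : nmodType) (T : finType) k (G : seq T -> V) :
  \sum_(t : k.-tuple T) G t = \sum_(t : k.-tuple T) G (rev t).
Proof.
have inj : injective (@rev_tuple k T).
  by move=> t1 t2 /(congr1 val) /= /(congr1 rev); rewrite !revK => /val_inj.
by rewrite (reindex_inj inj).
Qed.

Lemma gpart_iter (A : finType) (g : vectType C) (br : g -> g -> g) (form : g -> g -> C)
  (f : A -> g) (a : g) k :
  gpart (iter k (adux br form f) (az A a)) = realize (iter k (aduz br f) (constS a)).
Proof.
elim: k => [|k IH].
  apply: functional_extensionality => e; apply: functional_extensionality => mu.
  apply: functional_extensionality => N.
  rewrite /= /realize /constS andbC.
  have -> : (N == - e - 1) = (e + N + 1 == 0) by apply/eqP/eqP => ?; lia.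
  by [].
rewrite iterS /adux /= IH.
apply: functional_extensionality => e; apply: functional_extensionality => mu.
apply: functional_extensionality => N.
rewrite /realize aduzE /Op partition_fst; apply: eq_bigr => al _.
apply: eq_bigr => p /eqP <-.
rewrite /pw /one_w scale1r addr0.
by congr (br _ (_ _ _)); rewrite -!addrA (addrC 1).
Qed.

Lemma key (A : finType) (g : vectType C) (br : g -> g -> g) (form : g -> g -> C)
  (f : A -> g) (a : g) (Hlie : is_lie_bracket br) (Hform : inv_sym_form br form) k e mu :
  \sum_(p <- finsupp mu) p.2%:~R * form (f p.1)
     (iter k (aduz br f) (constS a) (e - p.2 + 1) (mu `\ p)%mset)
  = (-1) ^+ k * form (iter k (aduz br f) (duz f) e mu) a.
Proof.
have Hbr := br_lin Hlie.
set X := iter k (aduz br f) (constS a).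
have L1 : forall al0, pw (fun y => (form (f al0) y : C^o)) X =
   fun e mu => \sum_(t : k.-tuple A) Mw t (@constG A C^o (form (f al0) (nest br f t a))) e mu.
  move=> al0; rewrite /X iter_aduz // (pw_sum _ _ _ (form_linr Hform _)).
  apply: functional_extensionality => e'; apply: functional_extensionality => mu'.
  apply: eq_bigr => t _.
  rewrite (Mw_pw _ _ (form_linr Hform _)).
  change (constS a) with (@constG A g a).
  by rewrite (pw_const _ _ (nest_lin f t Hbr)) (pw_const _ _ (form_linr Hform _)).
transitivity (\sum_(al0 : A) Op al0 intw 1 (pw (fun y => (form (f al0) y : C^o)) X) e mu).
  rewrite partition_fst; apply: eq_bigr => al _; apply: eq_bigr => p /eqP <-.
  by [].
rewrite (eq_bigr (fun al0 => \sum_(t : k.-tuple A)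
   Mw t (Op al0 intw 1 (@constG A C^o ((-1) ^+ k * form (nest br f t (f al0)) a))) e mu));
  last first.
  move=> al0 _; rewrite L1 Op_sum /=.
  rewrite (sum_tuple_rev k (fun s => Op al0 intw 1
     (Mw s (@constG A C^o (form (f al0) (nest br f s a)))) e mu)).
  apply: eq_bigr => t _.
  by rewrite Op_Mw Mw_rev (form_nest Hlie Hform) size_rev revK size_tuple.
pose psi := fun y => ((-1) ^+ k * form y a : C^o).
have Hpsi : lin psi.
  move=> c x y; rewrite /psi (form_linl Hform a c x y) mulrDr.
  by rewrite /GRing.scale /= mulrCA.
have R : forall Y : int -> Mon A -> g, (-1) ^+ k * form (Y e mu) a = pw psi Y e mu by [].
rewrite R iter_aduz // (pw_sum _ _ _ Hpsi) /= exchange_big /=.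
apply: eq_bigr => t _.
rewrite (Mw_pw _ _ Hpsi) duzE (pw_sum _ _ _ (nest_lin f t Hbr)) (pw_sum _ _ _ Hpsi) Mw_sum /=.
apply: eq_bigr => al0 _.
rewrite (Op_pw _ _ _ _ (nest_lin f t Hbr)) (Op_pw _ _ _ _ Hpsi).
by rewrite (pw_const _ _ (nest_lin f t Hbr)) (pw_const _ _ Hpsi).
Qed.

Lemma cpart_adux (A : finType) (g : vectType C) br form (f : A -> g) F e mu :
  cpart (adux br form f F) e mu = \sum_(p <- finsupp mu)
    p.2%:~R * form (f p.1) (gpart F e (mu `\ p)%mset (- p.2)).
Proof. by []. Qed.

Theorem mainTheorem2
  (g : vectType C) (br : g -> g -> g) (form : g -> g -> C)
  (h : {vspace g}) (Pi Sig Du : seq (hdual h))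
  (A : finType) (f : A -> g)
  (Hlie : is_lie_bracket br) (Hsimple : simple_lie br)
  (Hform : inv_sym_form br form) (Hnorm : normalized br form Pi)
  (Hcartan : cartan br h) (HPi : is_base br Pi) (HSig : {subset Sig <= Pi})
  (HDu : forall l, l \in Du <-> in_Du br Pi Sig l)
  (Hf : basis_of (ubar br Du) [seq f al | al <- enum A])
  (a : g) (k : nat) :
  iter k (adux br form f) (az A a) = rhs br form f a k.
Proof.
apply: W_eq; first exact: gpart_iter.
case: k => [//|k].
apply: functional_extensionality => e; apply: functional_extensionality => mu.
rewrite iterS cpart_adux gpart_iter /realize /rhs /pairS /=.
exact: key.
Qed.
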